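(* Let $t$ be a positive integer that is not a power of two. Then the number of $k\in\{0,1,\dots,t\}$ for which $\mathfrak{a}_t(t,k)$ is odd is an odd integer greater than one (in particular, not a power of two).
   Context: Let $\mathfrak{a}_t:\mathbb{Z}\times\mathbb{Z}\to\mathbb{Z}$ be the unique function satisfying: (i) $\mathfrak{a}_t(0,0)=1$; (ii) $\mathfrak{a}_t(n,k)=0$ if $n<0$, or $k<0$, or $k>\min\{\lfloor (n-1+t)/2\rfloor, n\}$; (iii) $\mathfrak{a}_t(n,k)=\mathfrak{a}_t(n-1,k-1)+\mathfrak{a}_t(n-1,k)$ for all other integer pairs $(n,k)$. *)

(* Defs.v *)
From mathcomp Require Import all_boot.
Set Implicit Arguments. Unset Strict Implicit. Unset Printing Implicit Defensive.

(* frak a_t(n,k) restricted to n, k >= 0 (it vanishes for negative arguments).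
   For t >= 1 the bound floor((n-1+t)/2) is a nonnegative integer, computed
   here in nat as (n + t - 1)./2; the only truncation case n = t = 0 is
   the pair (0,0), where the value is 1 by clause (i). *)
Fixpoint frak_a (t n k : nat) {struct n} : nat :=
  match n with
  | 0 => if k == 0 then 1 else 0
  | n'.+1 =>
      if k > minn ((n + t - 1)./2) n then 0
      else (match k with 0 => 0 | k'.+1 => frak_a t n' k' end) + frak_a t n' k
  end.

Example ex1 : [seq frak_a 3 3 k | k <- iota 0 4] = [:: 1; 3; 3; 0]. Proof. by []. Qed.

(* Main.v *)
Require Import Defs.
From mathcomp Require Import all_boot.
From mathcomp Require Import zify.

Lemma frak_bin t n k : n < t -> frak_a t n k = 'C(n, k).
Proof.
elim: n k => [|n IH] k hn /=; first by case: k.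
have hm : minn ((n.+1 + t - 1)./2) n.+1 = n.+1.
  apply/minn_idPr. rewrite geq_half_double -addnn. lia.
rewrite hm. case: ltnP => hk; first by rewrite bin_small.
case: k hk => [|k] hk; first by rewrite IH ?bin0 // ltnW.
by rewrite !IH ?binS 1?addnC // ltnW.
Qed.

Lemma frak_top t k : 0 < t -> frak_a t t k = if k < t then 'C(t, k) else 0.
Proof.
case: t => [//|t] _ /=.
have hm : minn ((t.+1 + t.+1 - 1)./2) t.+1 = t.
  have -> : t.+1 + t.+1 - 1 = true + t.*2 by rewrite -addnn; lia.
  by rewrite half_bit_double; apply/minn_idPl.
rewrite hm ltnS. case: ltnP => hk //.
case: k hk => [|k] hk; first by rewrite !frak_bin ?bin0.
by rewrite !frak_bin // ?binS addnC // ltnW.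
Qed.

Lemma odd_sum n (F : nat -> nat) :
  odd (\sum_(i < n) F i) = odd (\sum_(i < n) odd (F i)).
Proof.
elim: n => [|n IH]; first by rewrite !big_ord0.
by rewrite !big_ord_recr /= !oddD IH; case: (odd (F n)).
Qed.

Lemma odd_low v m j : odd m -> 0 < m -> j < 2 ^ v -> odd 'C(2 ^ v * m - 1, j).
Proof.
move=> om m0; elim: j => [|j IH] hj; first by rewrite bin0.
have := mul_bin_left (2 ^ v * m - 1) j.
have [b cb hb] := pfactor_coprime (isT : prime 2) (ltn0Sn j).
set a := logn 2 j.+1 in hb.
have hb0 : 0 < b by rewrite lt0n; apply/eqP => b0; rewrite b0 in hb.
have ha : a < v.
  rewrite -(ltn_exp2l _ _ (isT : 1 < 2)). apply: leq_ltn_trans hj.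
  by rewrite hb leq_pmull.
move: ('C(_, j.+1)) ('C(_, j)) (IH (ltnW hj)) => x y oy e.
have h2 : 2 ^ v = 2 ^ a * 2 ^ (v - a) by rewrite -expnD subnKC // ltnW.
have hbm : b <= 2 ^ (v - a) * m.
  rewrite -(leq_pmul2l (expn_gt0 2 a)) mulnA -h2 mulnC -hb.
  apply: leq_trans (ltnW hj) _. by rewrite leq_pmulr.
have hdec : 2 ^ v * m - 1 - j = 2 ^ a * (2 ^ (v - a) * m - b).
  rewrite mulnBr h2 mulnA [2 ^ a * b]mulnC -hb. lia.
rewrite hdec hb [b * _]mulnC -!mulnA in e.
move/eqP: e; rewrite eqn_pmul2l ?expn_gt0 // => /eqP e.
have := congr1 odd e. rewrite !oddM oy andbT.
rewrite coprime2n in cb. rewrite cb oddB // oddM oddX subn_eq0 leqNgt ha om /=.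
by move=> ->.
Qed.

Lemma witness t : 0 < t -> (forall e : nat, t <> 2 ^ e) ->
  exists k, 0 < k < t /\ odd 'C(t, k).
Proof.
move=> t0 np.
have [m cm hm] := pfactor_coprime (isT : prime 2) t0.
set v := logn 2 t in hm. rewrite coprime2n in cm.
have m0 : 0 < m by case: m cm {hm}.
have m1 : m != 1 by apply/eqP => m1; apply: (np v); rewrite hm m1 mul1n.
have m3 : 2 < m by case: m cm m0 m1 {hm} => [|[|[|]]].
exists (2 ^ v); split.
  rewrite expn_gt0 /= hm -[X in X < _]mul1n ltn_pmul2r ?expn_gt0 //.
  by apply: leq_trans m3.
have := mul_bin_diag t (2 ^ v).-1.
rewrite prednK ?expn_gt0 // {1}hm [m * _]mulnC -mulnA => /eqP.
rewrite eqn_pmul2l ?expn_gt0 // => /eqP <-.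
rewrite oddM cm /= -subn1 hm mulnC. apply: odd_low => //. have := expn_gt0 2 v; lia.
Qed.

Theorem lemma4p4 (t : nat) :
  0 < t -> (forall e : nat, t <> 2 ^ e) ->
  let c := #|[set k : 'I_t.+1 | odd (frak_a t t k)]| in
  odd c /\ 1 < c.
Proof.
move=> t0 np c.
have hc : c = \sum_(k < t.+1) odd (frak_a t t k).
  rewrite /c -sum1_card big_mkcond /=; apply: eq_bigr => i _. by rewrite inE; case: odd.
have hc2 : c.+1 = \sum_(k < t.+1) odd 'C(t, k).
  rewrite hc big_ord_recr /= frak_top // ltnn /= addn0.
  rewrite big_ord_recr /= binn addn1; congr _.+1.

  by apply: eq_bigr => i _; rewrite frak_top // ltn_ord.
split.
  have := odd_sum t.+1 (fun k => 'C(t, k)).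
  rewrite -hc2 /=.
  have -> : \sum_(i < t.+1) 'C(t, i) = 2 ^ t.
    rewrite -[2]/(1 + 1) expnDn; apply: eq_bigr => i _; by rewrite !exp1n !muln1.
  rewrite oddX /= orbF; case: (t) t0 => // n _ /=; by case: (odd c).
have [k [/andP [k0 kt] ok]] := @witness t t0 np.
have i0 : (ord0 : 'I_t.+1) \in [set k : 'I_t.+1 | odd (frak_a t t k)].
  by rewrite inE frak_top // t0 bin0.
have ik : (inord k : 'I_t.+1) \in [set k : 'I_t.+1 | odd (frak_a t t k)].
  rewrite inE inordK; last by rewrite ltnW. by rewrite frak_top // kt.
have : #|[set (ord0 : 'I_t.+1); inord k]| <= c.
  rewrite /c; apply: subset_leq_card; apply/subsetP => x; rewrite !inE => /orP [] /eqP ->; [move: i0 | move: ik]; rewrite inE => ->; done.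
have hne : (ord0 : 'I_t.+1) != inord k.
  apply/eqP => /(congr1 val). rewrite /= inordK; last by rewrite ltnW.
  by move=> e; rewrite -e in k0.
rewrite cards2 hne. exact.
Qed.
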